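(* Let $k\ge1$, let $\Gamma=\mathbb{Z}_2\,\mathrm{wr}\,\mathbb{Z}^k=\Sigma\rtimes_\alpha\mathbb{Z}^k$ with $\Sigma=\bigoplus_{x\in\mathbb{Z}^k}(\mathbb{Z}_2)_{(x)}$, and let $\phi:\Gamma\to\Gamma$ be an automorphism, with restriction $\phi'=\phi|_\Sigma:\Sigma\to\Sigma$. Write $\phi'(\delta_0)=\delta_{x(1)}+\dots+\delta_{x(n)}$ with distinct $x(1),\dots,x(n)\in\mathbb{Z}^k$. Then $n=1$. Moreover, $\phi'$ permutes the set $\{\delta_x : x\in\mathbb{Z}^k\}$.
   Context: $\mathbb{Z}_2\,\mathrm{wr}\,\mathbb{Z}^k$ is the semidirect product $\Sigma\rtimes_\alpha\mathbb{Z}^k$, where $\Sigma=\bigoplus_{x\in\mathbb{Z}^k}(\mathbb{Z}_2)_{(x)}$ (finitely supported), each $(\mathbb{Z}_2)_{(x)}\cong\mathbb{Z}_2$ has nontrivial element $\delta_x$, and $\alpha(y)(\delta_x)=\delta_{y+x}$ for $y\in\mathbb{Z}^k$. The subgroup $\Sigma$ is the torsion subgroup of $\Gamma$, hence characteristic, so $\phi(\Sigma)=\Sigma$. *)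

(* Defs.v *)
From HB Require Import structures.
From mathcomp Require Import all_boot all_order all_algebra.
From mathcomp Require Import finmap.
Set Implicit Arguments. Unset Strict Implicit. Unset Printing Implicit Defensive.
Import GRing.Theory.
Local Open Scope ring_scope.
Local Open Scope fset_scope.

Definition Zk (k : nat) := 'rV[int]_k.

(* Sigma = (+)_{x in Z^k} Z_2, an element being identified with its (finite)
   support; group law = symmetric difference.  delta_x = [fset x]. *)
Definition Sigma (k : nat) := {fset Zk k}.

Definition symd (k : nat) (S T : Sigma k) : Sigma k := (S `\` T) `|` (T `\` S).

Definition alpha (k : nat) (y : Zk k) (S : Sigma k) : Sigma k :=
  [fset ((y + x)%R : Zk k) | x in S].

Definition Gamma (k : nat) := (Sigma k * Zk k)%type.

Definition gmul (k : nat) (g h : Gamma k) : Gamma k :=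
  (symd g.1 (alpha g.2 h.1), (g.2 + h.2)%R).

Definition delta (k : nat) (x : Zk k) : Gamma k := ([fset x], 0%R).

Definition is_automorphism (k : nat) (phi : Gamma k -> Gamma k) : Prop :=
  bijective phi /\ forall g h : Gamma k, phi (gmul g h) = gmul (phi g) (phi h).

(* Main.v *)
Require Import Defs.
From HB Require Import structures.
From mathcomp Require Import all_boot all_order all_algebra.
From mathcomp Require Import finmap.
From mathcomp Require Import zify.
Set Implicit Arguments. Unset Strict Implicit. Unset Printing Implicit Defensive.
Import Order.TTheory GRing.Theory Num.Theory.
Local Open Scope ring_scope.


Section Basics.
Variable k : nat.
Implicit Types (S T U : Sigma k) (x y z : Zk k).

Lemma in_symd S T z : (z \in symd S T) = (z \in S) (+) (z \in T).
Proof. by rewrite /symd in_fsetU !in_fsetD; case: (z \in S); case: (z \in T). Qed.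

Lemma in_alpha y S z : (z \in alpha y S) = (- y + z \in S).
Proof.
apply/imfsetP/idP => [[x /= xS ->]|h]; first by rewrite addKr.
by exists (- y + z) => //; rewrite addNKr.
Qed.

Lemma alpha0 S : alpha 0 S = S.
Proof. by apply/fsetP => z; rewrite in_alpha oppr0 add0r. Qed.

Lemma alpha_set0 y : alpha y fset0 = fset0.
Proof. by apply/fsetP => z; rewrite in_alpha !in_fset0. Qed.

Lemma alphaA y1 y2 S : alpha y1 (alpha y2 S) = alpha (y1 + y2) S.
Proof. by apply/fsetP => z; rewrite !in_alpha opprD addrA (addrC (-y2)). Qed.

Lemma alpha1 y x : alpha y [fset x]%fset = [fset ((y + x)%R : Zk k)]%fset.
Proof.
apply/fsetP => z; rewrite in_alpha !in_fset1.
by apply/eqP/eqP => [<-|->]; rewrite ?addNKr ?addKr.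
Qed.

Lemma alpha_symd y S T : alpha y (symd S T) = symd (alpha y S) (alpha y T).
Proof. by apply/fsetP => z; rewrite !(in_alpha, in_symd). Qed.

Lemma symd0 S : symd S fset0 = S.
Proof. by apply/fsetP => z; rewrite in_symd in_fset0 addbF. Qed.
Lemma sym0d S : symd fset0 S = S.
Proof. by apply/fsetP => z; rewrite in_symd in_fset0. Qed.
Lemma symdd S : symd S S = fset0.
Proof. by apply/fsetP => z; rewrite in_symd in_fset0 addbb. Qed.
Lemma symdA S T U : symd S (symd T U) = symd (symd S T) U.
Proof. by apply/fsetP => z; rewrite !in_symd addbA. Qed.
Lemma symdC S T : symd S T = symd T S.
Proof. by apply/fsetP => z; rewrite !in_symd addbC. Qed.
Lemma symd_eq0 S T : symd S T = fset0 -> S = T.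
Proof.
move=> /fsetP h; apply/fsetP => z; move: (h z); rewrite in_symd in_fset0.
by case: (z \in S); case: (z \in T).
Qed.

Lemma double0 (y : Zk k) : y + y = y -> y = 0.
Proof. by move=> h; apply: (addrI y); rewrite h addr0. Qed.

Lemma double_eq0 (y : Zk k) : y + y = 0 -> y = 0.
Proof.
move=> h; apply/matrixP => i j; move/matrixP: h => /(_ i j).
rewrite !mxE => /eqP; rewrite -mulr2n mulrn_eq0 /= => /eqP //.
Qed.

End Basics.

Section Aut.
Variable k : nat.
Implicit Types (S T U : Sigma k) (x y z : Zk k).
Variable phi : Gamma k -> Gamma k.
Hypothesis hom : forall g h, phi (gmul g h) = gmul (phi g) (phi h).
Hypothesis inj : injective phi.

Definition e0 : Gamma k := (fset0 : Sigma k, 0 : Zk k).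

Lemma gmulE S y T z : gmul (S, y) (T, z) = (symd S (alpha y T), y + z).
Proof. by []. Qed.

Lemma phi_e : phi e0 = e0.
Proof.
have := hom e0 e0; rewrite /e0 gmulE alpha_set0 symd0 addr0.
case: (phi _) => S y; rewrite gmulE => -[hS /esym hy].
have y0 := double0 hy; rewrite y0 in hS *.
by rewrite alpha0 symdd in hS; rewrite hS.
Qed.

Lemma phi_sigma S : phi (S, 0) = ((phi (S, 0)).1, 0).
Proof.
have := hom (S, 0) (S, 0); rewrite gmulE alpha0 symdd addr0 -/e0 phi_e.
case: (phi _) => T y; rewrite gmulE => -[_ /esym /double_eq0 ->] //.
Qed.

Definition a x := (phi (fset0, x)).2.
Definition Q := (phi (delta 0)).1.

Lemma phi_delta x : phi (delta x) = (alpha (a x) Q, 0).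
Proof.
have -> : delta x = gmul (gmul (fset0, x) (delta 0)) (fset0, - x).
  by rewrite /delta !gmulE sym0d alpha1 alpha_set0 symd0 !addr0 subrr.
have h1 : gmul (fset0, x) (fset0, - x) = e0.
  by rewrite gmulE alpha_set0 symd0 subrr.
have := congr1 phi h1; rewrite phi_e hom !hom.
have -> : phi (delta 0) = (Q, 0) by rewrite /Q /delta phi_sigma.
rewrite /a; case: (phi (fset0, x)) => R1 a1; case: (phi (fset0, -x)) => R2 b /=.
rewrite !gmulE => -[/symd_eq0 hR hab].
by rewrite addr0 hab hR symdC symdA symdd sym0d.
Qed.

Lemma a_add x y : a (x + y) = a x + a y.
Proof.
rewrite /a; have -> : (fset0, x + y) = gmul (fset0, x) (fset0, y) :> Gamma k.
  by rewrite gmulE alpha_set0 symd0.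
by rewrite hom; case: (phi _) => ? ?; case: (phi _).
Qed.

Lemma a0 : a 0 = 0.
Proof. by rewrite /a -/e0 phi_e. Qed.

Lemma a_eq0 x : a x = 0 -> x = 0.
Proof.
move=> hx.
have h : phi (fset0, x) = ((phi (fset0, x)).1, 0).
  by rewrite -hx /a; case: (phi _).
have : phi (gmul (fset0, x) (fset0, x)) = phi e0.
  by rewrite hom h gmulE alpha0 symdd addr0 phi_e.
move/inj; rewrite gmulE /e0 => -[_]; exact: double_eq0.
Qed.

Lemma a_inj : injective a.
Proof.
move=> x y hxy; apply/eqP; rewrite -subr_eq0; apply/eqP/a_eq0.
by rewrite a_add hxy -a_add subrr a0.
Qed.

Lemma phi_fset (s : seq (Zk k)) (S : Sigma k) : uniq s -> S =i s ->
  exists U, phi (S, 0) = (U, 0) /\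
    forall z, (z \in U) = odd (count (fun x => (- a x + z) \in Q) s).
Proof.
elim: s S => [|x0 s IH] S.
  move=> _ hS; have -> : S = fset0 by apply/fsetP => z; rewrite hS in_fset0.
  exists fset0; split => //.
  have := phi_e; rewrite /e0 => ->; done.
move=> /= /andP[x0s us] hS.
have hS' : (S `\ x0)%fset =i s.
  move=> z; rewrite in_fsetD1 hS in_cons.
  case: (eqVneq z x0) => [->|//]; by rewrite (negbTE x0s).
have [U [hU hz]] := IH _ us hS'.
have -> : (S, 0) = gmul (delta x0) ((S `\ x0)%fset, 0) :> Gamma k.
  rewrite /delta gmulE alpha0 addr0; congr (_, _); apply/fsetP => z.
  rewrite in_symd in_fsetD1 in_fset1 hS in_cons.
  by case: eqP.
rewrite hom phi_delta hU gmulE alpha0 addr0; exists (symd (alpha (a x0) Q) U).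
split=> // z; rewrite in_symd in_alpha hz /= oddD oddb //.
Qed.

End Aut.

Lemma exists_max (T : eqType) (s : seq T) (g : T -> int) : s != [::] ->
  exists2 x, x \in s & forall y, y \in s -> g y <= g x.
Proof.
elim: s => [//|x s IH] _.
case: (eqVneq s [::]) => [->|sn].
  by exists x; rewrite ?mem_head // => y; rewrite inE => /eqP ->.
have [m ms hm] := IH sn.
case: (lerP (g m) (g x)) => hxm.
  exists x; first exact: mem_head.
  move=> y; rewrite inE => /orP[/eqP ->//|/hm]; move=> h; exact: le_trans h hxm.
exists m; first by rewrite inE ms orbT.
move=> y; rewrite inE => /orP[/eqP ->|/hm//]; exact: ltW.
Qed.

Section Func.
Variable k : nat.

Definition fc (c : int) (v : Zk k) : int := \sum_(i < k) v 0 i * c ^+ i.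

Lemma fcD c u v : fc c (u + v) = fc c u + fc c v.
Proof. by rewrite /fc -big_split; apply: eq_bigr => i _; rewrite mxE mulrDl. Qed.

Lemma fcN c u : fc c (- u) = - fc c u.
Proof. by rewrite /fc -sumrN; apply: eq_bigr => i _; rewrite mxE mulNr. Qed.

Definition pw (w : Zk k) : {poly int} := \sum_(i < k) w 0 i *: 'X^i.

Lemma pw_horner c w : (pw w).[c] = fc c w.
Proof.
rewrite /pw horner_sum; apply: eq_bigr => i _; by rewrite hornerZ hornerXn.
Qed.

Lemma pw_neq0 w : w != 0 -> pw w != 0.
Proof.
apply: contraNneq => h; apply/eqP/matrixP => i j.
rewrite ord1 mxE; move/polyP: h => /(_ j); rewrite coef_sum coef0 (bigD1 j) //=.
rewrite coefZ coefXn eqxx mulr1 big1 ?addr0 // => l hij.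
by rewrite coefZ coefXn (_ : (j == l :> nat) = false) ?mulr0 //; apply/negbTE; rewrite eq_sym; exact: hij.
Qed.

Lemma exists_inj (D : seq (Zk k)) : exists c, {in D &, injective (fc c)}.
Proof.
pose R := \prod_(u <- D) \prod_(v <- D | u != v) pw (u - v).
have R0 : R != 0.
  rewrite prodf_seq_neq0; apply/allP => u _ /=; rewrite prodf_seq_neq0.
  apply/allP => v _; apply/implyP => huv; apply: pw_neq0; by rewrite subr_eq0.
pose rs := [seq (i%:Z) | i <- iota 0 (size R)].
have : ~~ all (root R) rs.
  apply/negP => hall.
  have hu : uniq rs by rewrite map_inj_uniq ?iota_uniq // => m n [].
  by have := max_poly_roots R0 hall hu; rewrite size_map size_iota ltnn.
rewrite -has_predC => /hasP[c _ /= hc]; exists c => u v uD vD huv.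
apply/eqP; apply: contraNT hc => neq; rewrite rootE.
apply/negPn/negP; rewrite /R horner_prod prodf_seq_neq0 => /allP /(_ u uD) /=.
rewrite horner_prod prodf_seq_neq0 => /allP /(_ v vD) /implyP /(_ neq).
by rewrite pw_horner fcD fcN huv subrr eqxx.
Qed.

End Func.

Lemma fc0 k c : fc c (0 : Zk k) = 0.
Proof. by rewrite /fc big1 // => i _; rewrite mxE mul0r. Qed.

Lemma main_aut k (phi : Gamma k -> Gamma k) : is_automorphism phi ->
  exists q0, phi (delta 0) = ([fset q0]%fset, 0) /\
    forall x, exists y, phi (delta x) = delta y.
Proof.
case=> -[psi h1 h2] hom; have inj : injective phi by exact: can_inj h1.
have [g hg] : exists g, phi g = delta 0 by exists (psi (delta 0)); rewrite h2.
have g2 : g.2 = 0.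
  have : phi (gmul g g) = phi (e0 k).
    by rewrite hom hg /delta gmulE alpha0 symdd addr0 phi_e.
  move/inj; case: g {hg} => S y; rewrite gmulE /e0 => -[_]; exact: double_eq0.
have [S gS] : exists S, g = (S, 0) by exists g.1; move: g2; case: g {hg} => ? ? /= ->.
pose s := enum_fset S.
have [U [hU hz]] := phi_fset hom (fset_uniq S) (fun z => erefl (z \in S)).
have U0 : U = [fset 0]%fset by move: hU; rewrite -gS hg /delta => -[->].
pose Qs := enum_fset (Q phi).
pose D := map (a phi) s ++ Qs.
have [c cinj] := exists_inj D.
have inDa x : x \in s -> a phi x \in D by move=> xs; rewrite mem_cat map_f.
have inDq q : q \in Q phi -> q \in D by move=> qQ; rewrite mem_cat orbC; apply/orP; left.
have [x00 x00s hx00] : exists2 x, x \in s & (- a phi x + 0) \in Q phi.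
  have : (0 : Zk k) \in U by rewrite U0 in_fset1.
  rewrite hz => /odd_gt0; rewrite -has_count => /hasP[x xs hx]; by exists x.
have sn : s != [::] by apply/eqP => hs; rewrite hs in x00s.
have Qn : Qs != [::] by apply/eqP => hs; have : (- a phi x00 + 0) \in Qs := hx00; rewrite hs.
have key : forall G : Zk k -> int, (forall u v, G (u + v) = G u + G v) ->
    (forall u, G (- u) = - G u) -> {in D &, injective G} ->
    forall xm qm, xm \in s -> qm \in Q phi ->
    (forall x, x \in s -> G (a phi x) <= G (a phi xm)) ->
    (forall q, q \in Q phi -> G q <= G qm) -> a phi xm + qm = 0.
  move=> G GD GN Ginj xm qm xms qmQ hxm hqm.
  have : (a phi xm + qm) \in U.
    rewrite hz (@eq_in_count _ _ (pred1 xm)) ?count_uniq_mem ?fset_uniq ?xms //.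
    move=> x xs /=; case: (eqVneq x xm) => [->|nx]; first by rewrite addKr.
    apply/negbTE/negP => hq.
    have k1 := hqm _ hq; have k2 := hxm _ xs.
    rewrite GD GN GD in k1.
    have hG : G (a phi x) = G (a phi xm) by lia.
    by move/(Ginj _ _ (inDa _ xs) (inDa _ xms))/(a_inj hom inj): hG; apply/eqP.
  by rewrite U0 in_fset1 => /eqP.
have [x0 x0s hx0] := exists_max (fun x => fc c (a phi x)) sn.
have [q0 q0s hq0] := exists_max (fc c) Qn.
have [x1 x1s hx1] := exists_max (fun x => - fc c (a phi x)) sn.
have [q1 q1s hq1] := exists_max (fun v => - fc c v) Qn.
have e0' := key (fc c) (@fcD k c) (@fcN k c) cinj x0 q0 x0s q0s hx0 hq0.
have gD : forall u v : Zk k, - fc c (u + v) = - fc c u + - fc c v by move=> u v; rewrite fcD opprD.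
have gN : forall u : Zk k, - fc c (- u) = - (- fc c u) by move=> u; rewrite fcN.
have gI : {in D &, injective (fun v => - fc c v)}.
  by move=> u v hu hv /oppr_inj h; apply: cinj.
have e1 := key (fun v => - fc c v) gD gN gI x1 q1 x1s q1s hx1 hq1.
have f0 := congr1 (fc c) e0'; have f1 := congr1 (fc c) e1.
rewrite fcD fc0 in f0; rewrite fcD fc0 in f1.
have l1 := hx0 _ x1s; have l2 := hq1 _ q0s; simpl in l1, l2.
have Qe : Q phi = [fset q0]%fset.
  apply/fsetP => q; rewrite in_fset1; apply/idP/eqP => [qQ|->//].
  have l3 := hq0 _ qQ; have l4 := hq1 _ qQ; simpl in l3, l4.
  apply: cinj; rewrite ?inDq //; lia.
exists q0; split.
  by rewrite (phi_delta hom) (a0 hom) alpha0 Qe.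
move=> x; exists (a phi x + q0); by rewrite (phi_delta hom) Qe alpha1.
Qed.

Local Open Scope fset_scope.

Theorem lemma2p1 (k : nat) (hk : (0 < k)%N) (phi : Gamma k -> Gamma k)
  (hphi : is_automorphism phi) :
  (* phi'(delta_0) = delta_{x(1)} + ... + delta_{x(n)} lies in Sigma and n = 1 *)
  (exists S : Sigma k, phi (delta 0%R) = (S, 0%R) /\ #|` S| = 1%N) /\
  (* phi' permutes {delta_x : x in Z^k} *)
  (forall x : Zk k, exists y : Zk k, phi (delta x) = delta y) /\
  (forall y : Zk k, exists x : Zk k, phi (delta x) = delta y).
Proof.
have [q0 [h0 hx]] := main_aut hphi.
split; first by exists [fset q0]; rewrite cardfs1.
split=> // y.
case: hphi => -[psi h1 h2] hom.
have hpsi : is_automorphism psi.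
  split; first by exists phi.
  move=> g h; apply: (can_inj h1); by rewrite h2 hom !h2.
have [_ [_ hy]] : exists q1, psi (delta 0) = ([fset q1]%fset, 0) /\
    forall x, exists y, psi (delta x) = delta y by exact: main_aut hpsi.
have [x hxy] := hy y; exists x; by rewrite -hxy h2.
Qed.
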